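(* Consider POWERSET SALIQUOT. Then $\mathcal{SG}(0)=0$, and $\mathcal{SG}(n)=2^p$, if $2^p$ is largest power of two divisor of $n\ge 1$.
   Context: POWERSET SALIQUOT is the impartial normal-play game on nonnegative integer heaps where from a heap $n\ge1$ a player chooses any nonempty set $S$ of positive divisors of $n$ and moves to the disjunctive sum of the heaps $n-d$, $d\in S$; the heap $0$ is terminal. $\mathcal{SG}$ denotes the Sprague-Grundy value (mex rule, nim-sum). *)

(* Defs.v *)
From Stdlib Require PeanoNat.
From mathcomp Require Import all_boot.
Set Implicit Arguments. Unset Strict Implicit. Unset Printing Implicit Defensive.

(* all subsequences (= subsets, for a duplicate-free list) of s *)
Fixpoint subseqs (s : seq nat) : seq (seq nat) :=
  if s is x :: s' then let r := subseqs s' in r ++ map (cons x) r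
  else [:: [::]].

Definition nimsum (s : seq nat) : nat := foldr Nat.lxor 0 s.

Definition mex (s : seq nat) : nat :=
  find (fun m => m \notin s) (iota 0 (size s).+1).

(* Grundy values computed by fuel-bounded recursion: from heap n >= 1
   a move picks a nonempty set S of positive divisors of n and goes to the
   disjunctive sum of heaps n - d, d in S; its value is the nim-sum. *)
Fixpoint sg_fuel (k n : nat) : nat :=
  match k with
  | 0 => 0
  | k'.+1 =>
    if n is 0 then 0 else
    mex [seq nimsum [seq sg_fuel k' (n - d) | d <- D]
        | D <- subseqs (divisors n) & D != [::]]
  end.

(* Sprague-Grundy value of heap n in POWERSET SALIQUOT
   (fuel n.+1 suffices since every move strictly decreases heap sizes) *)
Definition SG (n : nat) : nat := sg_fuel n.+1 n.

(* Main.v *)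
Require Import Defs.
From mathcomp Require Import all_boot.
From Stdlib Require PeanoNat.
From mathcomp Require Import zify.

Definition fv (n : nat) : nat := if n == 0 then 0 else 2 ^ logn 2 n.

Lemma expE m n : expn m n = Nat.pow m n.
Proof. elim: n => // n IH. by rewrite expnS IH. Qed.

Lemma mexP (s : seq nat) m : m \notin s -> (forall j, j < m -> j \in s) -> mex s = m.
Proof.
move=> ms hs.
have hm : m <= size s.
  have -> : m = size (iota 0 m) by rewrite size_iota.
  apply: uniq_leq_size; first exact: iota_uniq.
  move=> j; rewrite mem_iota add0n => /andP[_]; exact: hs.
rewrite /mex.
set a := (fun m0 => m0 \notin s).
have hhas : has a (iota 0 (size s).+1).
  by apply/hasP; exists m => //; rewrite mem_iota add0n /= ltnS hm.
have hk := hhas; rewrite has_find size_iota in hk.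
have := nth_find 0 hhas. rewrite nth_iota // add0n /a => hnot.
case: (ltngtP (find a (iota 0 (size s).+1)) m) => // H.
- by rewrite hs in hnot.
- have := before_find 0 H. rewrite nth_iota ?add0n /a ?ms // ?(leq_trans H hk).
Qed.

Lemma nil_subseqs s : [::] \in subseqs s.
Proof. elim: s => [|x s IH] //=; by rewrite mem_cat IH. Qed.

Lemma mask_subseqs m s : mask m s \in subseqs s.
Proof.
elim: s m => [|x s IH] [|b m] //=; first by rewrite mem_cat nil_subseqs.
case: b; rewrite mem_cat ?IH //.
by rewrite (map_f (cons x) (IH m)) orbT.
Qed.

Lemma subseq_subseqs D s : subseq D s -> D \in subseqs s.
Proof. by case/subseqP => m _ ->; exact: mask_subseqs. Qed.

Lemma subseqs_sub {D s} : D \in subseqs s -> {subset D <= s}.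
Proof.
elim: s D => [|x s IH] D /=; first by rewrite inE => /eqP->.
rewrite mem_cat => /orP[/IH H | /mapP[D' /IH H ->]] y.
- by move/H => hy; rewrite inE hy orbT.
- by rewrite !inE => /orP[->//|/H ->]; rewrite orbT.
Qed.

Lemma nimsum_bit s q :
  Nat.testbit (nimsum s) q = odd (count (fun y => Nat.testbit y q) s).
Proof.
elim: s => [|y s IH]; first exact: PeanoNat.Nat.bits_0.
change (nimsum (y :: s)) with (Nat.lxor y (nimsum s)).
rewrite PeanoNat.Nat.lxor_spec IH /= oddD; by case: (Nat.testbit y q).
Qed.

Lemma logn_eq x k : 0 < x -> 2^k %| x -> ~~ (2^k.+1 %| x) -> logn 2 x = k.
Proof.
move=> x0; rewrite !pfactor_dvdn // => h1; rewrite -ltnNge ltnS => h2.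
by apply/eqP; rewrite eqn_leq h1 h2.
Qed.

Lemma val_low {n q} : 0 < n -> q < logn 2 n -> logn 2 (n - 2^q) = q.
Proof.
move=> n0 hq.
have hn : 2^q.+1 %| n by rewrite pfactor_dvdn.
have hq' : 2^q %| n by rewrite pfactor_dvdn // ltnW.
have lt1 : 2^q < 2^q.+1 by rewrite ltn_exp2l.
have lt : 2^q < n by apply: leq_trans lt1 (dvdn_leq n0 hn).
apply: logn_eq; first by rewrite subn_gt0.
  exact: dvdn_sub.
apply/negP => h.
have : 2^q.+1 %| n - (n - 2^q) by exact: dvdn_sub.
rewrite subKn ?(ltnW lt) // => /(dvdn_leq (expn_gt0 2 q)).
by rewrite leqNgt lt1.
Qed.

Lemma val_ne {n d} : 0 < n -> d %| n -> d < n -> logn 2 (n - d) != logn 2 n.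
Proof.
move=> n0 dn ltdn; set p := logn 2 n; apply/eqP => E.
have hnd : 0 < n - d by rewrite subn_gt0.
have h1 : 2^p %| n - d by rewrite pfactor_dvdn // E.
have h2 : ~~ (2^p.+1 %| n - d) by rewrite pfactor_dvdn // E ltnn.
have h3 : 2^p %| n by rewrite pfactor_dvdn.
have h4 : ~~ (2^p.+1 %| n) by rewrite pfactor_dvdn // ltnn.
have h5 : 2^p %| d.
  have -> : d = n - (n - d) by rewrite subKn // ltnW.
  exact: dvdn_sub.
move: h1 h2 h4 dn hnd ltdn.
case/dvdnP: h3 => a ->; case/dvdnP: h5 => b ->.
have p0 : 0 < 2^p by rewrite expn_gt0.
rewrite expnS -mulnBl !dvdn_pmul2r // !dvdn2 !negbK => _ oab oa ba hab _.
have bo : odd b by apply: dvdn_odd ba oa.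
have bla : b <= a.
  by apply: dvdn_leq ba; case: a oa {oab hab}.
by move: oab; rewrite oddB // oa bo.
Qed.

Lemma fv_bit_p n d : 0 < n -> d \in divisors n ->
  Nat.testbit (fv (n - d)) (logn 2 n) = false.
Proof.
move=> n0; rewrite -dvdn_divisors // => dn.
have := dvdn_leq n0 dn; rewrite leq_eqVlt => /orP[/eqP->|ltdn].
  by rewrite subnn /fv /=; exact: PeanoNat.Nat.bits_0.
rewrite /fv; have -> : (n - d == 0) = false by apply/negbTE; rewrite -lt0n subn_gt0.
rewrite expE PeanoNat.Nat.pow2_bits_eqb.
apply/PeanoNat.Nat.eqb_neq => E; move: (val_ne (n:=n) (d:=d) n0 dn ltdn); by rewrite E eqxx.
Qed.

Definition L n := [seq nimsum [seq fv (n - d) | d <- D]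
                  | D <- subseqs (divisors n) & D != [::]].

Lemma mex_main n : 0 < n -> mex (L n) = 2 ^ logn 2 n.
Proof.
move=> n0; set p := logn 2 n; apply: mexP.
- apply/mapP => [[D]]; rewrite mem_filter => /andP[_ HD] E.
  have : Nat.testbit (2^p) p = true by rewrite expE PeanoNat.Nat.pow2_bits_true.
  rewrite E nimsum_bit (@eq_in_count _ _ pred0) ?count_pred0 //.
  by move=> y /mapP[d hd ->]; rewrite /= fv_bit_p // (subseqs_sub HD _ hd).
move=> j hj.
case j0: (j == 0).
  apply/mapP; exists [:: n].
    by rewrite mem_filter /= subseq_subseqs // sub1seq -dvdn_divisors.
  by rewrite (eqP j0) /= subnn.
set P := fun d => (d == 2^logn 2 d) && (logn 2 d < p) && Nat.testbit j (logn 2 d).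
set D := filter P (divisors n).
have key : nimsum [seq fv (n - d) | d <- D] = j.
  apply: PeanoNat.Nat.bits_inj => q.
  rewrite nimsum_bit count_map count_filter.
  set c := (q < p) && Nat.testbit j q.
  rewrite (@eq_in_count _ _ (fun d => (d == 2^q) && c)); last first.
    move=> d; rewrite -dvdn_divisors // => dn /=.
    have d0 : 0 < d by case: d dn => //; rewrite dvd0n; case: (n) n0.
    rewrite /P.
    case: (boolP ((d == 2 ^ logn 2 d) && (logn 2 d < p) && Nat.testbit j (logn 2 d))).
      case/andP => /andP[/eqP hd hr] hb; rewrite andbT.
      have ltdn : d < n.
        have h2p : 2 ^ p <= n by apply: (dvdn_leq n0); rewrite pfactor_dvdn // leqnn.
        rewrite hd; apply: leq_trans h2p; by rewrite ltn_exp2l.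
      rewrite /fv.
      have -> : (n - d == 0) = false by apply/negbTE; rewrite -lt0n subn_gt0.
      rewrite hd val_low // [X in Nat.testbit X _]expE PeanoNat.Nat.pow2_bits_eqb.
      case: PeanoNat.Nat.eqb_spec => [E|ne].
        by rewrite /c -E hr hb eqxx.
      by rewrite eqn_exp2l //; have /eqP/negbTE -> : logn 2 d <> q by [].
    move=> nP; rewrite andbF; apply/esym/negbTE; apply: contra nP.
    case/andP => /eqP -> /andP[hq hb]; by rewrite pfactorK // eqxx hq hb.
  case: (boolP c) => hc.
    rewrite (@eq_count _ _ (pred1 (2^q))); last by move=> d; rewrite andbT.
    rewrite count_uniq_mem ?divisors_uniq // -dvdn_divisors // pfactor_dvdn //.
    move: hc; rewrite /c => /andP[hq ->]; by rewrite ltnW.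
  rewrite (@eq_count _ _ pred0); last by move=> d; rewrite andbF.
  rewrite count_pred0 /=; apply/esym.
  move: hc; rewrite /c negb_and -leqNgt => /orP[hq|/negbTE //].
  rewrite -(PeanoNat.Nat.mod_small j (2 ^ p)); last first.
    exact/ltP.
  rewrite expE; apply: PeanoNat.Nat.mod_pow2_bits_high; exact/leP.
apply/mapP; exists D => //.
rewrite mem_filter subseq_subseqs ?filter_subseq // andbT.
by apply/eqP => E; move: key; rewrite E /= => j0'; rewrite -j0' in j0.
Qed.

Lemma fuel k n : n < k -> sg_fuel k n = fv n.
Proof.
elim: k n => [|k IH] n //.
case: n => [|n] hn; first by [].
rewrite /= /fv /= -(@mex_main n.+1) //; congr mex.
rewrite /L; apply/eq_in_map => D; rewrite mem_filter => /andP[_ HD].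
congr nimsum; apply/eq_in_map => d hd; apply: IH.
have := subseqs_sub HD _ hd; rewrite -dvdn_divisors // => dn.
have d0 : 0 < d by case: d dn {hd}.
lia.
Qed.

Theorem mainTheorem15 :
  SG 0 = 0 /\ (forall n : nat, 0 < n -> SG n = 2 ^ logn 2 n).
Proof.
split; first by [].
move=> n hn; rewrite /SG fuel // /fv.
by case: n hn.
Qed.
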